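(* Let $N$ be an nfa with $n$ states accepting the language $L$, and suppose $L$ has exactly $2^n$ distinct left derivatives. Then $\mathrm{LQ}(L)$ is a boolean algebra, and $\mathrm{ns}(L)=\mathrm{nsyn}(L)=n$.
   Context: Left derivatives: $u^{-1}L=\{w:uw\in L\}$. $\mathrm{LQ}(L)$ is the set of finite unions (including $\emptyset$) of left derivatives, ordered by inclusion. An nfa has finitely many states, transition relations, and sets of initial and final states (several initial states allowed). $\mathrm{ns}(L)$ is the least number of states of an nfa accepting $L$; $\mathrm{nsyn}(L)$ is the least number of states of an nfa for $L$ all of whose states accept languages in the boolean algebra generated by the two-sided derivatives $u^{-1}Lv^{-1}=\{w:uwv\in L\}$. *)

(* Defs.v *)
From mathcomp Require Import all_boot.
Set Implicit Arguments. Unset Strict Implicit. Unset Printing Implicit Defensive.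

Definition lang (A : Type) := seq A -> Prop.

Definition subl A (K K' : lang A) := forall w, K w -> K' w.
Definition eql A (K K' : lang A) := forall w, K w <-> K' w.

Definition lderiv A (u : seq A) (L : lang A) : lang A := fun w => L (u ++ w).
Definition tderiv A (u v : seq A) (L : lang A) : lang A := fun w => L (u ++ w ++ v).

Definition num_lderivs A (L : lang A) (k : nat) : Prop :=
  exists us : seq (seq A),
    size us = k /\
    (forall i j, i < k -> j < k -> i <> j ->
       ~ eql (lderiv (nth [::] us i) L) (lderiv (nth [::] us j) L)) /\
    (forall u, exists2 i, i < k & eql (lderiv u L) (lderiv (nth [::] us i) L)).

(* LQ(L): finite unions (including the empty union) of left derivatives. *)
Definition LQ A (L : lang A) (K : lang A) : Prop :=
  exists s : seq (seq A),
    eql K (fun w => exists2 i, i < size s & L (nth [::] s i ++ w)).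

(* Joins and meets are
   taken inside P (least upper / greatest lower bounds in P). *)
Definition is_lub A (P : lang A -> Prop) (x y z : lang A) :=
  P z /\ subl x z /\ subl y z /\
  forall t, P t -> subl x t -> subl y t -> subl z t.
Definition is_glb A (P : lang A -> Prop) (x y z : lang A) :=
  P z /\ subl z x /\ subl z y /\
  forall t, P t -> subl t x -> subl t y -> subl t z.
Definition is_bot A (P : lang A -> Prop) (b : lang A) :=
  P b /\ forall t, P t -> subl b t.
Definition is_top A (P : lang A -> Prop) (b : lang A) :=
  P b /\ forall t, P t -> subl t b.

Definition boolean_algebra A (P : lang A -> Prop) : Prop :=
  (exists b, is_bot P b) /\ (exists t, is_top P t) /\
  (forall x y, P x -> P y -> exists z, is_lub P x y z) /\
  (forall x y, P x -> P y -> exists z, is_glb P x y z) /\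
  (* distributivity: x /\ (y \/ z) = (x /\ y) \/ (x /\ z) *)
  (forall x y z j a m1 m2 b, P x -> P y -> P z ->
     is_lub P y z j -> is_glb P x j a ->
     is_glb P x y m1 -> is_glb P x z m2 -> is_lub P m1 m2 b -> eql a b) /\
  (forall x, P x -> exists2 c, P c &
     (forall m, is_glb P x c m -> is_bot P m) /\
     (forall j, is_lub P x c j -> is_top P j)).

Record nfa (A : finType) (n : nat) := Nfa {
  nfa_init : {set 'I_n};
  nfa_final : {set 'I_n};
  nfa_trans : 'I_n -> A -> {set 'I_n}
}.

Fixpoint nfa_reach (A : finType) n (N : nfa A n) (S : {set 'I_n}) (w : seq A)
  : {set 'I_n} :=
  match w with
  | [::] => S
  | a :: w' => nfa_reach N (\bigcup_(q in S) nfa_trans N q a) w'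
  end.

Definition nfa_lang (A : finType) n (N : nfa A n) : lang A :=
  fun w => nfa_reach N (nfa_init N) w :&: nfa_final N != set0.

Definition state_lang (A : finType) n (N : nfa A n) (q : 'I_n) : lang A :=
  fun w => nfa_reach N [set q] w :&: nfa_final N != set0.

Definition accepts_lang (A : finType) n (N : nfa A n) (L : lang A) :=
  eql (nfa_lang N) L.

Definition is_ns (A : finType) (L : lang A) (k : nat) : Prop :=
  (exists N : nfa A k, accepts_lang N L) /\
  (forall m (M : nfa A m), accepts_lang M L -> k <= m).

Inductive in_gen_BA (A : Type) (G : lang A -> Prop) : lang A -> Prop :=
  | gba_gen K : G K -> in_gen_BA G K
  | gba_empty : in_gen_BA G (fun _ => False)
  | gba_compl K : in_gen_BA G K -> in_gen_BA G (fun w => ~ K w)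
  | gba_union K K' : in_gen_BA G K -> in_gen_BA G K' ->
      in_gen_BA G (fun w => K w \/ K' w)
  | gba_ext K K' : in_gen_BA G K -> eql K K' -> in_gen_BA G K'.

Definition two_sided_derivs A (L : lang A) (K : lang A) : Prop :=
  exists u v, eql K (tderiv u v L).

Definition syn_nfa (A : finType) n (N : nfa A n) (L : lang A) : Prop :=
  forall q : 'I_n, in_gen_BA (two_sided_derivs L) (state_lang N q).

Definition is_nsyn (A : finType) (L : lang A) (k : nat) : Prop :=
  (exists N : nfa A k, accepts_lang N L /\ syn_nfa N L) /\
  (forall m (M : nfa A m), accepts_lang M L -> syn_nfa M L -> k <= m).

(* Main.v *)
Require Import Defs.
From mathcomp Require Import all_boot.
Set Implicit Arguments. Unset Strict Implicit. Unset Printing Implicit Defensive.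

Lemma card_setT' (T : finType) : #|{set T}| = 2 ^ #|T|.
Proof. by rewrite -(cardsT T) -card_powerset powersetT cardsT. Qed.

Lemma reach_cat (A : finType) n (N : nfa A n) S u w :
  nfa_reach N S (u ++ w) = nfa_reach N (nfa_reach N S u) w.
Proof. by elim: u S => //= a u IH S; rewrite IH. Qed.

Lemma mem_reach (A : finType) n (N : nfa A n) S w x :
  (x \in nfa_reach N S w) = [exists q in S, x \in nfa_reach N [set q] w].
Proof.
elim: w S => [|a w IH] S /=.
  apply/idP/existsP => [xS|[q /andP[qS]]].
    by exists x; rewrite xS in_set1 eqxx.
  by rewrite in_set1 => /eqP->.
rewrite IH; apply/existsP/existsP => [[p /andP[/bigcupP[q qS pq] xp]]|[q /andP[qS]]].
  exists q; rewrite qS /= IH big_set1; apply/existsP; exists p; by rewrite pq.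
rewrite IH big_set1 => /existsP[p /andP[pq xp]]; exists p; rewrite xp andbT.
by apply/bigcupP; exists q.
Qed.

Definition sl (A : finType) n (N : nfa A n) q w : bool :=
  nfa_reach N [set q] w :&: nfa_final N != set0.
Definition G (A : finType) n (N : nfa A n) (S : {set 'I_n}) : lang A :=
  fun w => [exists q in S, sl N q w].

Lemma acc_G (A : finType) n (N : nfa A n) S w :
  (nfa_reach N S w :&: nfa_final N != set0) = [exists q in S, sl N q w].
Proof.
apply/set0Pn/existsP => [[x /setIP[xr xf]]|[q /andP[qS /set0Pn[x /setIP[xr xf]]]]].
  move: xr; rewrite mem_reach => /existsP[q /andP[qS xq]]; exists q; rewrite qS.
  by apply/set0Pn; exists x; rewrite inE xq.
by exists x; rewrite inE xf andbT mem_reach; apply/existsP; exists q; rewrite qS.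
Qed.

Lemma lderiv_G (A : finType) n (N : nfa A n) u w :
  lderiv u (nfa_lang N) w <-> G N (nfa_reach N (nfa_init N) u) w.
Proof. by rewrite /lderiv /nfa_lang /G reach_cat acc_G. Qed.

Lemma G_mono (A : finType) n (N : nfa A n) (S T : {set 'I_n}) :
  S \subset T -> subl (G N S) (G N T).
Proof.
move=> ST w /existsP[q /andP[qS h]]; apply/existsP; exists q.
by rewrite (subsetP ST _ qS).
Qed.

Lemma G_sub (A : finType) n (N : nfa A n)
  (Hinj : forall S T, (forall w, G N S w <-> G N T w) -> S = T) (S T : {set 'I_n}) :
  subl (G N S) (G N T) -> S \subset T.
Proof.
move=> h; apply/setUidPr; apply: Hinj => w; split; last first.
  by apply: G_mono; apply: subsetUr.
move=> /existsP[q /andP[]]; rewrite inE => /orP[qS|qT] hq.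
  by apply: h; apply/existsP; exists q; rewrite qS.
by apply/existsP; exists q; rewrite qT.
Qed.

Lemma LQ_char (A : finType) n (N : nfa A n)
  (Honto : forall S, exists u, nfa_reach N (nfa_init N) u = S) K :
  LQ (nfa_lang N) K <-> exists S, eql K (G N S).
Proof.
split.
  move=> [s hs]; exists (\bigcup_(i < size s) nfa_reach N (nfa_init N) (nth [::] s i)).
  move=> w; split.
    move=> /hs [i ilt /lderiv_G /existsP[q /andP[qi hq]]]; apply/existsP; exists q.
    rewrite hq andbT; apply/bigcupP; by exists (Ordinal ilt).
  move=> /existsP[q /andP[/bigcupP[i _ qi] hq]]; apply/hs; exists i => //.
  by apply/lderiv_G; apply/existsP; exists q; rewrite qi.
move=> [S hS]; have [u hu] := Honto S; exists [:: u] => w; split.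
  by move=> /hS h; exists 0 => //=; apply/lderiv_G; rewrite hu.
by move=> [[|i] //= _ /lderiv_G]; rewrite hu => /hS.
Qed.

Definition HinjP (A : finType) n (N : nfa A n) :=
  forall S T, (forall w, G N S w <-> G N T w) -> S = T.
Definition HontoP (A : finType) n (N : nfa A n) :=
  forall S, exists u, nfa_reach N (nfa_init N) u = S.

Lemma subl_G (A : finType) n (N : nfa A n) (Hinj : HinjP N) (x y : lang A) (X Y : {set 'I_n}) :
  eql x (G N X) -> eql y (G N Y) -> (subl x y <-> X \subset Y).
Proof.
move=> hx hy; split.
  by move=> h; apply: (G_sub Hinj) => w /hx /h /hy.
by move=> XY w /hx /(G_mono XY) /hy.
Qed.

Lemma P_G (A : finType) n (N : nfa A n) (Honto : HontoP N) (X : {set 'I_n}) : LQ (nfa_lang N) (G N X).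
Proof. by apply/(LQ_char Honto); exists X. Qed.

Lemma lub_char (A : finType) n (N : nfa A n) (Hinj : HinjP N) (Honto : HontoP N) (x y z : lang A) (X Y : {set 'I_n}) :
  eql x (G N X) -> eql y (G N Y) -> is_lub (LQ (nfa_lang N)) x y z -> eql z (G N (X :|: Y)).
Proof.
move=> hx hy [/(LQ_char Honto) [Z hz] [xz [yz m]]].
have e : Z = X :|: Y.
  have XZ : X \subset Z by apply/(subl_G Hinj hx hz).
  have YZ : Y \subset Z by apply/(subl_G Hinj hy hz).
  apply/eqP; rewrite eqEsubset subUset XZ YZ andbT.
  have [hh _] := subl_G Hinj hz (fun w => iff_refl (G N (X :|: Y) w)); rewrite andbT; apply: hh.
  apply: (m (G N (X :|: Y))); first exact: (P_G Honto (X :|: Y)).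
    by apply/(subl_G Hinj hx (fun w => iff_refl (G N (X :|: Y) w))); apply: subsetUl.
  by apply/(subl_G Hinj hy (fun w => iff_refl (G N (X :|: Y) w))); apply: subsetUr.
by rewrite -e.
Qed.

Lemma glb_char (A : finType) n (N : nfa A n) (Hinj : HinjP N) (Honto : HontoP N) (x y z : lang A) (X Y : {set 'I_n}) :
  eql x (G N X) -> eql y (G N Y) -> is_glb (LQ (nfa_lang N)) x y z -> eql z (G N (X :&: Y)).
Proof.
move=> hx hy [/(LQ_char Honto) [Z hz] [xz [yz m]]].
have e : Z = X :&: Y.
  have XZ : Z \subset X by apply/(subl_G Hinj hz hx).
  have YZ : Z \subset Y by apply/(subl_G Hinj hz hy).
  apply/eqP; rewrite eqEsubset subsetI XZ YZ /=.
  have [hh _] := subl_G Hinj (fun w => iff_refl (G N (X :&: Y) w)) hz; apply: hh.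
  apply: (m (G N (X :&: Y))); first exact: (P_G Honto (X :&: Y)).
    by apply/(subl_G Hinj (fun w => iff_refl (G N (X :&: Y) w)) hx); apply: subsetIl.
  by apply/(subl_G Hinj (fun w => iff_refl (G N (X :&: Y) w)) hy); apply: subsetIr.
by rewrite -e.
Qed.

Lemma lub_ex (A : finType) n (N : nfa A n) (Hinj : HinjP N) (Honto : HontoP N) (x y : lang A) (X Y : {set 'I_n}) :
  eql x (G N X) -> eql y (G N Y) -> is_lub (LQ (nfa_lang N)) x y (G N (X :|: Y)).
Proof.
move=> hx hy; split; first exact: (P_G Honto (X :|: Y)).
split; first by apply/(subl_G Hinj hx (fun w => iff_refl (G N (X :|: Y) w))); apply: subsetUl.
split; first by apply/(subl_G Hinj hy (fun w => iff_refl (G N (X :|: Y) w))); apply: subsetUr.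
move=> t /(LQ_char Honto) [T hT] xt yt.
apply/(subl_G Hinj (fun w => iff_refl (G N (X :|: Y) w)) hT).
by rewrite subUset; apply/andP; split; apply/(subl_G Hinj _ hT).
Qed.

Lemma glb_ex (A : finType) n (N : nfa A n) (Hinj : HinjP N) (Honto : HontoP N) (x y : lang A) (X Y : {set 'I_n}) :
  eql x (G N X) -> eql y (G N Y) -> is_glb (LQ (nfa_lang N)) x y (G N (X :&: Y)).
Proof.
move=> hx hy; split; first exact: (P_G Honto (X :&: Y)).
split; first by apply/(subl_G Hinj (fun w => iff_refl (G N (X :&: Y) w)) hx); apply: subsetIl.
split; first by apply/(subl_G Hinj (fun w => iff_refl (G N (X :&: Y) w)) hy); apply: subsetIr.
move=> t /(LQ_char Honto) [T hT] xt yt.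
apply/(subl_G Hinj hT (fun w => iff_refl (G N (X :&: Y) w))).
by rewrite subsetI; apply/andP; split; apply/(subl_G Hinj hT).
Qed.

Lemma BA_thm (A : finType) n (N : nfa A n) (Hinj : HinjP N) (Honto : HontoP N) :
  boolean_algebra (LQ (nfa_lang N)).
Proof.
split.
  exists (G N set0); split; first exact: (P_G Honto set0).
  by move=> t _ w /existsP[q /andP[]]; rewrite inE.
split.
  exists (G N setT); split; first exact: (P_G Honto setT).
  by move=> t /(LQ_char Honto) [T hT] w /hT; apply: G_mono; apply: subsetT.
split.
  move=> x y /(LQ_char Honto) [X hx] /(LQ_char Honto) [Y hy].
  by exists (G N (X :|: Y)); apply: lub_ex.
split.
  move=> x y /(LQ_char Honto) [X hx] /(LQ_char Honto) [Y hy].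
  by exists (G N (X :&: Y)); apply: glb_ex.
split.
  move=> x y z j a m1 m2 b /(LQ_char Honto)[X hx] /(LQ_char Honto)[Y hy]
    /(LQ_char Honto)[Z hz] hj ha hm1 hm2 hb.
  have ej := lub_char Hinj Honto hy hz hj.
  have ea := glb_char Hinj Honto hx ej ha.
  have em1 := glb_char Hinj Honto hx hy hm1.
  have em2 := glb_char Hinj Honto hx hz hm2.
  have eb := lub_char Hinj Honto em1 em2 hb.
  rewrite setIUr in ea.
  by move=> w; split=> [/ea h|/eb h]; [apply/eb|apply/ea].
move=> x /(LQ_char Honto) [X hx]; exists (G N (~: X)); first exact: (P_G Honto (~: X)).
split.
  move=> m hm; have em := glb_char Hinj Honto hx (fun w => iff_refl (G N (~: X) w)) hm.
  rewrite setICr in em; split; first by apply/(LQ_char Honto); exists set0.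
  by move=> t _ w /em /existsP[q /andP[]]; rewrite inE.
move=> j hj; have em := lub_char Hinj Honto hx (fun w => iff_refl (G N (~: X) w)) hj.
rewrite setUCr in em; split; first by apply/(LQ_char Honto); exists setT.
move=> t /(LQ_char Honto) [T hT] w /hT h; apply/em; exact: (G_mono (subsetT T) h).
Qed.

Theorem mainTheorem19 (A : finType) (n : nat) (N : nfa A n) :
  num_lderivs (nfa_lang N) (2 ^ n) ->
  boolean_algebra (LQ (nfa_lang N)) /\
  is_ns (nfa_lang N) n /\ is_nsyn (nfa_lang N) n.
Proof.
move=> [us [hsz [hdist hcov]]].
pose f (i : 'I_(2 ^ n)) := nfa_reach N (nfa_init N) (nth [::] us i).
have finj : injective f.
  move=> i j e; apply/val_inj/eqP; apply/negPn/negP => /eqP ne.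
  apply: (hdist i j (ltn_ord i) (ltn_ord j) ne) => w.
  by split=> /lderiv_G h; apply/lderiv_G; rewrite /f in e; [rewrite -e | rewrite e].
have fonto : forall S, exists i, S = f i.
  move=> S; have : S \in codom f.
    by apply: (inj_card_onto finj); rewrite card_setT' !card_ord.
  by case/codomP => i ->; exists i.
have Honto : HontoP N.
  by move=> S; have [i ->] := fonto S; exists (nth [::] us i).
have Hinj : HinjP N.
  move=> S T hST; have [i ei] := fonto S; have [j ej] := fonto T.
  subst S T; congr f; apply/val_inj/eqP; apply/negPn/negP => /eqP ne.
  apply: (hdist i j (ltn_ord i) (ltn_ord j) ne) => w.
  by split=> /lderiv_G /hST /lderiv_G.
have lb : forall m (M : nfa A m), accepts_lang M (nfa_lang N) -> n <= m.
  move=> m M hM.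
  pose g (i : 'I_(2 ^ n)) := nfa_reach M (nfa_init M) (nth [::] us i).
  have hg : forall (i : 'I_(2 ^ n)) w, lderiv (nth [::] us i) (nfa_lang N) w <->
      (nfa_reach M (g i) w :&: nfa_final M != set0).
    move=> i w; split => h.
      by have := (hM (nth [::] us i ++ w)).2 h; rewrite /nfa_lang reach_cat.
    by apply: (hM _).1; rewrite /nfa_lang reach_cat.
  have ginj : injective g.
    move=> i j e; apply/val_inj/eqP; apply/negPn/negP => /eqP ne.
    apply: (hdist i j (ltn_ord i) (ltn_ord j) ne) => w.
    by split=> /hg h; apply/hg; [rewrite -e | rewrite e].
  have := @leq_card _ _ g ginj.
  by rewrite card_ord card_setT' card_ord leq_exp2l.
split; first exact: BA_thm.
split.
  split; first by exists N.
  exact: lb.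
split; last by move=> m M hM _; apply: lb hM.
exists N; split; first by [].
move=> q; have [u hu] := Honto [set q].
apply: (@gba_ext _ _ (tderiv u [::] (nfa_lang N))).
  by apply: gba_gen; exists u, [::].
move=> w; rewrite /tderiv /state_lang cats0 /nfa_lang reach_cat hu.
exact: iff_refl.
Qed.
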